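(* Let $h\in\mathbb R[x_1,\ldots,x_n]$ be homogeneous and hyperbolic in direction $e\in\mathbb R^n$, and let $\mathcal A_e(h)$, $\sigma=(\sigma_1,\ldots,\sigma_n)$ and $\Sigma^2\mathcal A_e(h)$ be as in the context. Then: (i) If $a\in\mathbb R^n$ satisfies $h(a)\neq 0$, then $a\bullet\sigma=a_1\sigma_1+\cdots+a_n\sigma_n$ is invertible in $\mathcal A_e(h)$. (ii) If $a\in\mathring{\Lambda}_e(h)$, then $a\bullet\sigma\in\Sigma^2\mathcal A_e(h)$. (iii) $1$ is an algebraic interior point of $\Sigma^2\mathcal A_e(h)$, i.e. for every hermitian element $b=b^*\in\mathcal A_e(h)$ there is $\varepsilon>0$ with $1+tb\in\Sigma^2\mathcal A_e(h)$ for all $t\in[-\varepsilon,\varepsilon]$.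
   Context: A homogeneous polynomial $h\in\mathbb R[x]=\mathbb R[x_1,\ldots,x_n]$ is hyperbolic in direction $e\in\mathbb R^n$ if $h(e)\neq0$ and for every $a\in\mathbb R^n$ the univariate polynomial $h_{a,e}(t):=h(a-te)$ has only real roots. The hyperbolicity cone is $\Lambda_e(h)=\{a\in\mathbb R^n: h_{a,e}(t)\text{ has only nonnegative roots}\}$, with interior $\mathring\Lambda_e(h)=\{a: h_{a,e}(t)\text{ has only positive roots}\}$. For $a\in\mathbb R^n$ and a tuple $z=(z_1,\dots,z_n)$ write $a\bullet z=a_1z_1+\cdots+a_nz_n$. Let $\mathbb C\langle z\rangle=\mathbb C\langle z_1,\ldots,z_n\rangle$ be the free noncommutative unital algebra with the involution $*$ (conjugate-linear, anti-multiplicative) determined by $z_i^*=z_i$. Let $J_e(h)$ be the two-sided ideal generated by all elements $h_{a,e}(a\bullet z)$, $a\in\mathbb R^n$, together with $1-e\bullet z$. The generalized Clifford algebra is the unital $*$-algebra $\mathcal A_e(h)=\mathbb C\langle z\rangle/J_e(h)$; $\sigma_i$ denotes the class of $z_i$. $\Sigma^2\mathcal A_e(h)$ denotes the convex cone of finite sums $\sum_i a_i^*a_i$ with $a_i\in\mathcal A_e(h)$. *)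

(* Defs.v *)
From Stdlib Require List.
From HB Require Import structures.
From mathcomp Require Import all_boot all_order all_algebra.
From mathcomp Require Import mpoly complex.
From mathcomp Require Import reals.

Set Implicit Arguments.
Unset Strict Implicit.
Unset Printing Implicit Defensive.

Import Order.TTheory GRing.Theory Num.Theory.
Local Open Scope ring_scope.

Definition homogeneous (R : realType) (n : nat) (h : {mpoly R[n]}) : Prop :=
  exists d : nat, forall m, m \in msupp h -> mdeg m = d.

(* h_{a,e}(t) := h(a - t e), as a univariate polynomial in t *)
Definition hae (R : realType) (n : nat) (h : {mpoly R[n]}) (a e : 'I_n -> R)
  : {poly R} :=
  (map_mpoly (@polyC R) h).@[fun i => (a i)%:P - (e i)%:P * 'X].

Definition cpoly (R : realType) (p : {poly R}) : {poly R[i]} :=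
  map_poly (fun x : R => (x%:C)%C) p.

Definition only_real_roots (R : realType) (p : {poly R}) : Prop :=
  forall z : R[i], root (cpoly p) z -> Im z = 0.

Definition only_pos_roots (R : realType) (p : {poly R}) : Prop :=
  forall z : R[i], root (cpoly p) z -> Im z = 0 /\ 0 < Re z.

Definition hyperbolic (R : realType) (n : nat) (h : {mpoly R[n]}) (e : 'I_n -> R)
  : Prop :=
  h.@[e] != 0 /\ forall a : 'I_n -> R, only_real_roots (hae h a e).

Definition in_hcone_interior (R : realType) (n : nat) (h : {mpoly R[n]})
  (e a : 'I_n -> R) : Prop :=
  only_pos_roots (hae h a e).

(* The free noncommutative *-algebra C<z_1,...,z_n>, C = R[i].               *)
(* An element is represented by its coefficient function on words            *)
(* (seq 'I_n); the polynomials are those with finitely many nonzero          *)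
(* coefficients (equivalently, bounded degree, since n is finite).          *)

Definition ncpoly (R : realType) (n : nat) := seq 'I_n -> R[i].

Section NC.
Variables (R : realType) (n : nat).
Local Notation C := (R[i]).
Local Notation P := (ncpoly R n).

Definition is_ncpoly (p : P) : Prop :=
  exists N : nat, forall w : seq 'I_n, (N <= size w)%N -> p w = 0.

Definition nc0 : P := fun _ => 0.
Definition nc1 : P := fun w => if w is [::] then 1 else 0.
Definition ncvar (i : 'I_n) : P := fun w => if w == [:: i] then 1 else 0.
Definition ncadd (p q : P) : P := fun w => p w + q w.
Definition ncscale (c : C) (p : P) : P := fun w => c * p w.
Definition ncsub (p q : P) : P := fun w => p w - q w.
Definition ncmul (p q : P) : P :=
  fun w => \sum_(k < (size w).+1) p (take k w) * q (drop k w).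
(* the involution: conjugate-linear, anti-multiplicative, z_i^* = z_i *)
Definition ncstar (p : P) : P := fun w => ((p (rev w))^*)%C.
Definition ncpow (p : P) (k : nat) : P := iter k (ncmul p) nc1.
Definition ncsum (s : seq P) : P := foldr ncadd nc0 s.

Definition ncdot (a : 'I_n -> R) : P :=
  fun w => \sum_(i < n) (a i)%:C%C * ncvar i w.

Definition ncpeval (q : {poly R}) (x : P) : P :=
  fun w => \sum_(k < size q) (q`_k)%:C%C * ncpow x k w.

End NC.

Definition Jgen (R : realType) (n : nat) (h : {mpoly R[n]}) (e : 'I_n -> R)
  (g : ncpoly R n) : Prop :=
  (exists a : 'I_n -> R, g = ncpeval (hae h a e) (ncdot a))
  \/ g = ncsub (@nc1 R n) (ncdot e).

Inductive inJ (R : realType) (n : nat) (h : {mpoly R[n]}) (e : 'I_n -> R)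
  : ncpoly R n -> Prop :=
| inJ_gen g : Jgen h e g -> inJ h e g
| inJ_add p q : inJ h e p -> inJ h e q -> inJ h e (ncadd p q)
| inJ_lmul p q : is_ncpoly p -> inJ h e q -> inJ h e (ncmul p q)
| inJ_rmul p q : inJ h e p -> is_ncpoly q -> inJ h e (ncmul p q).

(* Statements about A_e(h) = C<z>/J_e(h), written on representatives. *)

Definition invertibleA (R : realType) (n : nat) (h : {mpoly R[n]})
  (e : 'I_n -> R) (x : ncpoly R n) : Prop :=
  exists u : ncpoly R n, is_ncpoly u /\
    inJ h e (ncsub (ncmul x u) (@nc1 R n)) /\
    inJ h e (ncsub (ncmul u x) (@nc1 R n)).

Definition in_SOS (R : realType) (n : nat) (h : {mpoly R[n]})
  (e : 'I_n -> R) (x : ncpoly R n) : Prop :=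
  exists us : seq (ncpoly R n), List.Forall (@is_ncpoly R n) us /\
    inJ h e (ncsub x (ncsum [seq ncmul (ncstar u) u | u <- us])).

Definition hermitianA (R : realType) (n : nat) (h : {mpoly R[n]})
  (e : 'I_n -> R) (b : ncpoly R n) : Prop :=
  inJ h e (ncsub (ncstar b) b).

(* Main.v *)
Require Import Defs.
From HB Require Import structures.
From mathcomp Require Import all_boot all_order all_algebra.
From mathcomp Require Import mpoly complex.
From mathcomp Require Import reals boolp zify ring lra.
Import Order.TTheory GRing.Theory Num.Theory.
Local Open Scope ring_scope.
Set Implicit Arguments.
Unset Strict Implicit.
Unset Printing Implicit Defensive.
Section NCR.
Variables (R : realType) (n : nat).
Local Notation C := (R[i]).
Definition NC := ncpoly R n.
HB.instance Definition _ := gen_eqMixin NC.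
HB.instance Definition _ := gen_choiceMixin NC.

Definition ncopp (p : NC) : NC := fun w => - p w.

Lemma ncaddA : associative (@ncadd R n).
Proof. by move=> p q r; apply: funext => w; rewrite /ncadd addrA. Qed.
Lemma ncaddC : commutative (@ncadd R n).
Proof. by move=> p q; apply: funext => w; rewrite /ncadd addrC. Qed.
Lemma ncadd0 : left_id (@nc0 R n) (@ncadd R n).
Proof. by move=> p; apply: funext => w; rewrite /ncadd /nc0 add0r. Qed.
Lemma ncaddN : left_inverse (@nc0 R n) ncopp (@ncadd R n).
Proof. by move=> p; apply: funext => w; rewrite /ncadd /nc0 /ncopp addNr. Qed.

HB.instance Definition _ := GRing.isZmodule.Build NC ncaddA ncaddC ncadd0 ncaddN.

Lemma addE (p q : NC) w : (p + q) w = p w + q w. Proof. by []. Qed.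
Lemma oppE (p : NC) w : (- p) w = - p w. Proof. by []. Qed.
Lemma zeroE w : (0 : NC) w = 0. Proof. by []. Qed.
Lemma subE (p q : NC) w : (p - q) w = p w - q w. Proof. by []. Qed.
Lemma sumE I (r : seq I) (P : pred I) (F : I -> NC) w :
  (\sum_(i <- r | P i) F i) w = \sum_(i <- r | P i) F i w.
Proof. by elim/big_rec2: _ => // i y1 y2 _ <-. Qed.

Definition dl (x : 'I_n) (p : NC) : NC := fun w => p (x :: w).

Lemma mul_nil (p q : NC) : ncmul p q [::] = p [::] * q [::].
Proof. by rewrite /ncmul big_ord1. Qed.

Lemma mul_cons (p q : NC) x w :
  ncmul p q (x :: w) = p [::] * q (x :: w) + ncmul (dl x p) q w.
Proof. by rewrite /ncmul big_ord_recl /=. Qed.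

Definition csc (c : C) (p : NC) : NC := fun w => c * p w.

Lemma mulCl c (p q : NC) : ncmul (csc c p) q = csc c (ncmul p q).
Proof.
apply: funext => w; rewrite /ncmul /csc mulr_sumr.
by apply: eq_bigr => k _; rewrite mulrA.
Qed.
Lemma mulDl (p q r : NC) : ncmul (p + q) r = (ncmul p r : NC) + ncmul q r.
Proof.
apply: funext => w; rewrite /ncmul addE -big_split /=.
by apply: eq_bigr => k _; rewrite addE mulrDl.
Qed.
Lemma mulDr (r p q : NC) : ncmul r (p + q) = (ncmul r p : NC) + ncmul r q.
Proof.
apply: funext => w; rewrite /ncmul addE -big_split /=.
by apply: eq_bigr => k _; rewrite addE mulrDr.
Qed.
Lemma dlD x (p q : NC) : dl x (p + q) = dl x p + dl x q. Proof. by []. Qed.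

Lemma dl_mul x (p q : NC) :
  dl x (ncmul p q) = (csc (p [::]) (dl x q) : NC) + ncmul (dl x p) q.
Proof. by apply: funext => w; rewrite /dl mul_cons. Qed.

Lemma ncmulA : associative (@ncmul R n).
Proof.
move=> p q r; apply: funext => w.
elim: w p q r => [|x w IH] p q r.
  by rewrite !mul_nil mulrA.
rewrite !mul_cons !mul_nil dl_mul mulDl mulCl addE /csc IH.
by rewrite mulrDr !addrA mulrA.
Qed.

Lemma dl1 x : dl x (@nc1 R n) = 0. Proof. by []. Qed.

Lemma ncmul1 : left_id (@nc1 R n) (@ncmul R n).
Proof.
move=> p; apply: funext => w; case: w => [|x w].
  by rewrite mul_nil mul1r.
rewrite mul_cons /= mul1r.
suff -> : ncmul (dl x (@nc1 R n)) p w = 0 by rewrite addr0.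
by rewrite /ncmul big1 // => k _; rewrite /dl /nc1 mul0r.
Qed.

Lemma ncmul1r : right_id (@nc1 R n) (@ncmul R n).
Proof.
move=> p; apply: funext => w; elim: w p => [|x w IH] p.
  by rewrite mul_nil mulr1.
by rewrite mul_cons IH /nc1 mulr0 add0r.
Qed.

Lemma nc1_neq0 : (@nc1 R n : NC) != 0.
Proof.
apply/eqP => /(congr1 (fun f : NC => f [::])); rewrite /nc1 zeroE.
by move/eqP; rewrite oner_eq0.
Qed.

HB.instance Definition _ := GRing.Zmodule_isNzRing.Build NC
  ncmulA ncmul1 ncmul1r mulDl mulDr nc1_neq0.

Definition ncsR (r : R) (p : NC) : NC := fun w => r%:C%C * p w.

Lemma ncsRA a b (v : NC) : ncsR a (ncsR b v) = ncsR (a * b) v.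
Proof. by apply: funext => w; rewrite /ncsR mulrA rmorphM. Qed.
Lemma ncsR1 : left_id 1 ncsR.
Proof. by move=> v; apply: funext => w; rewrite /ncsR rmorph1 mul1r. Qed.
Lemma ncsRDr : right_distributive ncsR +%R.
Proof. by move=> a u v; apply: funext => w; rewrite /ncsR !addE mulrDr. Qed.
Lemma ncsRDl v : {morph ncsR^~ v: a b / a + b}.
Proof. by move=> a b; apply: funext => w; rewrite /ncsR !addE rmorphD mulrDl. Qed.

HB.instance Definition _ := GRing.Zmodule_isLmodule.Build R NC ncsRA ncsR1 ncsRDr ncsRDl.

Lemma scaleE r (p : NC) w : (r *: p) w = r%:C%C * p w. Proof. by []. Qed.
Lemma mulE (p q : NC) : p * q = ncmul p q. Proof. by []. Qed.
Lemma oneE : (1 : NC) = @nc1 R n. Proof. by []. Qed.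

Lemma ncsRAl a (u v : NC) : a *: (u * v) = (a *: u) * v.
Proof. by rewrite !mulE /GRing.scale /= -[ncsR a u]/(csc _ u) mulCl. Qed.

HB.instance Definition _ := GRing.Lmodule_isLalgebra.Build R NC ncsRAl.

Lemma mulCr c (p q : NC) : ncmul p (csc c q) = csc c (ncmul p q).
Proof.
apply: funext => w; rewrite /ncmul /csc mulr_sumr.
by apply: eq_bigr => k _; rewrite mulrCA.
Qed.

Lemma ncsRAr a (u v : NC) : a *: (u * v) = u * (a *: v).
Proof. by rewrite !mulE /GRing.scale /= -[ncsR a v]/(csc _ v) mulCr. Qed.

HB.instance Definition _ := GRing.Lalgebra_isAlgebra.Build R NC ncsRAr.

End NCR.
Lemma conjRM (R : realType) (r : R) (z : R[i]) : ((r%:C * z)^*)%C = r%:C%C * (z^*)%C.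
Proof. case: z => a b /=. apply/eqP; rewrite eq_complex /=; apply/andP; split; apply/eqP; ring. Qed.

Section Star.
Variables (R : realType) (n : nat).
Local Notation NC := (NC R n).

Definition st (p : NC) : NC := ncstar p.

Lemma stE (p : NC) w : st p w = ((p (rev w))^*)%C. Proof. by []. Qed.
Lemma stD (p q : NC) : st (p + q) = st p + st q.
Proof. by apply: funext => w; rewrite /st /ncstar !addE rmorphD. Qed.
Lemma stN (p : NC) : st (- p) = - st p.
Proof. by apply: funext => w; rewrite /st /ncstar !oppE rmorphN. Qed.
Lemma stB (p q : NC) : st (p - q) = st p - st q.
Proof. by rewrite stD stN. Qed.
Lemma st0 : st 0 = 0.
Proof. by apply: funext => w; rewrite /st /ncstar !zeroE rmorph0. Qed.
Lemma stZ r (p : NC) : st (r *: p) = r *: st p.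
Proof. by apply: funext => w; rewrite /st /ncstar !scaleE conjRM. Qed.
Lemma stK (p : NC) : st (st p) = p.
Proof. by apply: funext => w; rewrite /st /ncstar revK conjcK. Qed.
Lemma st1 : st 1 = 1.
Proof.
apply: funext => w; rewrite /st /ncstar oneE /nc1.
case: w => [|x w] /=; first by apply/eqP; rewrite eq_complex /= oppr0 !eqxx.
by rewrite rev_cons; case: (rev w) => [|? ?] /=; apply/eqP; rewrite eq_complex /= oppr0 !eqxx.
Qed.
Lemma st_sum I (r : seq I) (P : pred I) (F : I -> NC) :
  st (\sum_(i <- r | P i) F i) = \sum_(i <- r | P i) st (F i).
Proof. by elim/big_rec2: _ => [|i y1 y2 _ <-]; rewrite ?st0 ?stD. Qed.

Lemma stM (p q : NC) : st (p * q) = st q * st p.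
Proof.
apply: funext => w; rewrite /st /ncstar !mulE /ncmul size_rev rmorph_sum /=.
rewrite (reindex_inj rev_ord_inj) /=; apply: eq_bigr => k _.
have hk : (k <= size w)%N by rewrite -ltnS ltn_ord.
rewrite rmorphM mulrC /= subSS drop_rev take_rev subKn //.
Qed.

Lemma stX (p : NC) k : st (p ^+ k) = st p ^+ k.
Proof.
elim: k => [|k IH]; first by rewrite !expr0 st1.
by rewrite exprS stM IH -exprSr.
Qed.

Definition isp (p : NC) := is_ncpoly p.

Lemma isp0 : isp 0. Proof. by exists 0%N. Qed.
Lemma isp1 : isp 1. Proof. by exists 1%N => -[|x w]. Qed.
Lemma ispD p q : isp p -> isp q -> isp (p + q).
Proof.
move=> [N hN] [M hM]; exists (maxn N M) => w hw; rewrite addE hN ?hM ?addr0 //.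
  by apply: leq_trans hw; rewrite leq_maxr.
by apply: leq_trans hw; rewrite leq_maxl.
Qed.
Lemma ispN p : isp p -> isp (- p).
Proof. by move=> [N hN]; exists N => w hw; rewrite oppE hN ?oppr0. Qed.
Lemma ispB p q : isp p -> isp q -> isp (p - q).
Proof. by move=> hp hq; apply: ispD => //; apply: ispN. Qed.
Lemma ispZ r p : isp p -> isp (r *: p).
Proof. by move=> [N hN]; exists N => w hw; rewrite scaleE hN ?mulr0. Qed.
Lemma ispM p q : isp p -> isp q -> isp (p * q).
Proof.
move=> [N hN] [M hM]; exists (N + M)%N => w hw; rewrite mulE /ncmul.
apply: big1 => k _; have hk := ltn_ord k.
case: (leqP N k) => hNk.
  by rewrite hN ?mul0r // size_take; case: ifP => // _; apply: leq_trans hNk _.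
rewrite hM ?mulr0 // size_drop.
by rewrite leq_subRL ?(leq_trans (ltnW hNk)) //; [lia | lia].
Qed.
Lemma isp_sum I (r : seq I) (P : pred I) (F : I -> NC) :
  (forall i, P i -> isp (F i)) -> isp (\sum_(i <- r | P i) F i).
Proof. by move=> hF; apply: big_ind => //; [exact: isp0 | exact: ispD]. Qed.
Lemma ispX p k : isp p -> isp (p ^+ k).
Proof.
move=> hp; elim: k => [|k IH]; first by rewrite expr0; exact: isp1.
by rewrite exprS; apply: ispM.
Qed.
Lemma isp_st p : isp p -> isp (st p).
Proof. by move=> [N hN]; exists N => w hw; rewrite stE hN ?rmorph0 // size_rev. Qed.
Lemma isp_var i : isp (@ncvar R n i).
Proof. by exists 2%N => -[|x [|y w]] // _; rewrite /ncvar; case: ifP => // /eqP. Qed.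
Lemma isp_scal c : isp (fun w => if w is [::] then c else 0).
Proof. by exists 1%N => -[|x w]. Qed.

End Star.
Section Ideal.
Variables (R : realType) (n : nat) (h : {mpoly R[n]}) (e : 'I_n -> R).
Local Notation NC := (NC R n).
Local Notation J := (@inJ R n h e).

Lemma J0 : J (0 : NC).
Proof.
have G : J (ncsub (@nc1 R n) (ncdot e)) by apply: inJ_gen; right.
have := inJ_lmul (@isp0 R n) G.
by rewrite -[ncmul _ _]/((0 : NC) * _) mul0r.
Qed.
Lemma JD (x y : NC) : J x -> J y -> J (x + y).
Proof. exact: inJ_add. Qed.
Lemma JMl (a x : NC) : isp a -> J x -> J (a * x).
Proof. exact: inJ_lmul. Qed.
Lemma JMr (a x : NC) : isp a -> J x -> J (x * a).
Proof. by move=> ha hx; apply: inJ_rmul. Qed.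
Lemma JN (x : NC) : J x -> J (- x).
Proof.
move=> hx; rewrite -mulN1r; apply: JMl => //.
by apply: ispN; apply: isp1.
Qed.
Lemma JB (x y : NC) : J x -> J y -> J (x - y).
Proof. by move=> hx hy; apply: JD => //; apply: JN. Qed.
Lemma JZ r (x : NC) : J x -> J (r *: x).
Proof.
move=> hx; rewrite -mulr_algl; apply: JMl => //.
by apply: ispZ; apply: isp1.
Qed.
Lemma J_sum I (r : seq I) (P : pred I) (F : I -> NC) :
  (forall i, P i -> J (F i)) -> J (\sum_(i <- r | P i) F i).
Proof. by move=> hF; apply: big_ind => //; [exact: J0 | exact: JD]. Qed.
Lemma J_eq (x y : NC) : x = y -> J x -> J y. Proof. by move=> ->. Qed.

Definition SOS (s : NC) := exists us : seq NC,
  List.Forall (@isp R n) us /\ s = \sum_(u <- us) st u * u.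

Lemma ncsum_map (us : seq NC) :
  ncsum [seq ncmul (ncstar u) u | u <- us] = \sum_(u <- us) st u * u.
Proof.
elim: us => [|u us IH]; first by rewrite big_nil.
by rewrite big_cons /= IH.
Qed.

Lemma in_SOSP (x : NC) : in_SOS h e x <-> exists s, SOS s /\ J (x - s).
Proof.
split.
  move=> [us [hus hJ]]; exists (\sum_(u <- us) st u * u); split.
    by exists us.
  by rewrite -ncsum_map.
move=> [s [[us [hus ->]] hJ]]; exists us; split => //.
by rewrite ncsum_map.
Qed.

Lemma SOS0 : SOS 0. Proof. by exists [::]; rewrite big_nil. Qed.
Lemma SOSD s t : SOS s -> SOS t -> SOS (s + t).
Proof.
move=> [us [hu ->]] [vs [hv ->]]; exists (us ++ vs); split.
  by apply/List.Forall_app; split.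
by rewrite big_cat.
Qed.
Lemma SOSsq u : isp u -> SOS (st u * u).
Proof. by move=> hu; exists [:: u]; rewrite big_seq1; split => //; constructor. Qed.
Lemma SOS_conj a s : isp a -> SOS s -> SOS (st a * s * a).
Proof.
move=> ha [us [hu ->]]; exists [seq u * a | u <- us]; split.
  elim: hu => [|u us' hu1 _ IH] /=; constructor => //; exact: ispM.
rewrite big_map mulr_sumr mulr_suml; apply: eq_bigr => u _.
by rewrite stM !mulrA.
Qed.
Lemma SOSZ r s : 0 <= r -> SOS s -> SOS (r *: s).
Proof.
move=> hr [us [hu ->]]; exists [seq Num.sqrt r *: u | u <- us]; split.
  elim: hu => [|u us' hu1 _ IH] /=; constructor => //; exact: ispZ.
rewrite big_map scaler_sumr; apply: eq_bigr => u _.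
by rewrite stZ -scalerAr -scalerAl scalerA -expr2 sqr_sqrtr.
Qed.

Lemma IS_J (x s : NC) : SOS s -> J (x - s) -> in_SOS h e x.
Proof. by move=> hs hj; apply/in_SOSP; exists s. Qed.
Lemma IS_SOS s : SOS s -> in_SOS h e s.
Proof. by move=> hs; apply: (IS_J hs); rewrite subrr; apply: J0. Qed.
Lemma IS_cong (x y : NC) : J (x - y) -> in_SOS h e y -> in_SOS h e x.
Proof.
move=> hxy /in_SOSP [s [hs hj]]; apply: (IS_J hs).
by have := JD hxy hj; rewrite addrA subrK.
Qed.
Lemma IS_add (x y : NC) : in_SOS h e x -> in_SOS h e y -> in_SOS h e (x + y).
Proof.
move=> /in_SOSP [s [hs hj]] /in_SOSP [t [ht hk]]; apply: (IS_J (SOSD hs ht)).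
by apply: J_eq (JD hj hk); rewrite opprD addrACA.
Qed.
Lemma IS_conj (a x : NC) : isp a -> in_SOS h e x -> in_SOS h e (st a * x * a).
Proof.
move=> ha /in_SOSP [s [hs hj]]; apply: (IS_J (SOS_conj ha hs)).
rewrite -mulrBl -mulrBr; apply: JMr => //; apply: JMl => //; exact: isp_st.
Qed.
Lemma IS_Z r (x : NC) : 0 <= r -> in_SOS h e x -> in_SOS h e (r *: x).
Proof.
move=> hr /in_SOSP [s [hs hj]]; apply: (IS_J (SOSZ hr hs)).
by rewrite -scalerBr; apply: JZ.
Qed.
Lemma IS_cst r : 0 <= r -> in_SOS h e (r *: (1 : NC)).
Proof.
move=> hr; apply: IS_SOS; apply: SOSZ => //.
by rewrite -[1 in X in SOS X](mulr1 1) -{1}st1; apply: SOSsq; apply: isp1.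
Qed.

End Ideal.

Section Horner.
Variables (R : realType) (n : nat).
Local Notation NC := (NC R n).

Lemma halgE (x : NC) (p : {poly R}) :
  horner_alg x p = \sum_(k < size p) p`_k *: x ^+ k.
Proof.
rewrite /horner_alg /horner_morph (@horner_coef_wide _ (size p)); last first.
  by rewrite size_map_poly.
by apply: eq_bigr => k _; rewrite coef_map /= mulr_algl.
Qed.

Lemma ncpowE (x : NC) k : ncpow x k = x ^+ k.
Proof. by elim: k => [|k IH] //; rewrite exprS /ncpow /= -/(ncpow x k) IH. Qed.

Lemma ncpevalE (p : {poly R}) (x : NC) : ncpeval p x = horner_alg x p.
Proof.
apply: funext => w; rewrite halgE sumE /ncpeval.
by apply: eq_bigr => k _; rewrite scaleE ncpowE.
Qed.

Lemma isp_halg (x : NC) p : isp x -> isp (horner_alg x p).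
Proof.
move=> hx; rewrite halgE; apply: isp_sum => k _; apply: ispZ; exact: ispX.
Qed.

Lemma st_halg (x : NC) p : st (horner_alg x p) = horner_alg (st x) p.
Proof.
rewrite !halgE st_sum; apply: eq_bigr => k _; by rewrite stZ stX.
Qed.

Lemma halg_comp (x : NC) (p r : {poly R}) :
  horner_alg (horner_alg x r) p = horner_alg x (p \Po r).
Proof.
elim/poly_ind: p => [|p c IH]; first by rewrite comp_poly0 !rmorph0.
rewrite comp_polyD comp_polyM comp_polyX comp_polyC !rmorphD !rmorphM /=.
by rewrite IH !horner_algC horner_algX.
Qed.

End Horner.
Section PolyCore.
Variable R : realType.

Lemma E_coef_ge0 (ls : seq R) : (forall l, l \in ls -> 0 < l) ->
  forall i, 0 <= (\prod_(l <- ls) ('X + l%:P))`_i.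
Proof.
elim: ls => [|l ls IH] hl i.
  by rewrite big_nil coef1 ler0n.
rewrite big_cons coefM; apply: sumr_ge0 => j _; apply: mulr_ge0.
  rewrite coefD coefX coefC; apply: addr_ge0; first by rewrite ler0n.
  case: eqP => _ //; apply: ltW; apply: hl; exact: mem_head.
by apply: IH => l' hl'; apply: hl; rewrite in_cons hl' orbT.
Qed.

Lemma E_comp_neg (ls : seq R) :
  (\prod_(l <- ls) ('X + l%:P)) \Po (-'X) =
  ((-1) ^+ (size ls))%:P * \prod_(l <- ls) ('X - l%:P).
Proof.
elim: ls => [|l ls IH]; first by rewrite !big_nil expr0 mul1r comp_polyC.
rewrite !big_cons comp_polyM IH comp_polyD comp_polyX comp_polyC /= exprS polyCM.
ring.
Qed.

Lemma coprimep_prodXsubC (q : {poly R}) (s : seq R) :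
  (forall l, l \in s -> ~~ root q l) -> coprimep q (\prod_(l <- s) ('X - l%:P)).
Proof.
elim: s => [|l s IH] hs; first by rewrite big_nil coprimep1.
rewrite big_cons coprimepMr coprimep_XsubC hs ?mem_head //=.
by apply: IH => l' hl'; apply: hs; rewrite in_cons hl' orbT.
Qed.

Lemma root_prodXsubC (s : seq R) l : l \in s -> (\prod_(l' <- s) ('X - l'%:P)).[l] = 0.
Proof.
elim: s => [|l' s IH] //; rewrite in_cons big_cons hornerM => /orP [/eqP <-|hl].
  by rewrite hornerXsubC subrr mul0r.
by rewrite IH // mulr0.
Qed.

Lemma poly_core (ls : seq R) : (forall l, l \in ls -> 0 < l) ->
  exists m (g : nat -> {poly R}) (Q : {poly R}),
    'X = \sum_(k < m) g k ^+ 2 + (\prod_(l <- ls) ('X - l%:P)) * Q.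
Proof.
move=> hpos.
set E := \prod_(l <- ls) ('X + l%:P).
set P := \prod_(l <- ls) ('X - l%:P).
have hE := poly_even_odd E.
set A := even_poly E in hE; set B := odd_poly E in hE.
set sg := (-1) ^+ (size ls) : R.
have hneg : E \Po (-'X) = sg%:P * P by exact: E_comp_neg.
have hP : sg%:P * P = A \Po 'X^2 - (B \Po 'X^2) * 'X.
  rewrite -hneg -{1}hE comp_polyD comp_polyM comp_polyX -!comp_polyA.
  by rewrite comp_Xn_poly sqrrN mulrN.
have hEev x : E.[x] = A.[x ^+ 2] + B.[x ^+ 2] * x.
  by rewrite -{1}hE hornerD hornerM !horner_comp hornerX hornerXn.
have cop : coprimep (B \Po 'X^2) P.
  apply: coprimep_prodXsubC => l hl; rewrite /root horner_comp hornerXn.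
  apply/eqP => hB.
  have h1 : E.[- l] = 0.
    have -> : E.[- l] = (E \Po -'X).[l] by rewrite horner_comp hornerN hornerX.
    by rewrite hneg hornerCM /P root_prodXsubC // mulr0.
  have h2 : 0 < E.[l].
    rewrite /E horner_prod big_seq; apply: prodr_gt0 => j hj.
    by rewrite hornerD hornerX hornerC addr_gt0 // hpos.
  move: h1 h2; rewrite !hEev sqrrN hB !mul0r !addr0 => ->; by rewrite ltxx.
have /Bezout_eq1_coprimepP [[u v] /= huv] := cop.
set Bt := B \Po 'X^2 in hP huv; set A2 := A \Po 'X^2 in hP.
set C := B * A.
have hC k : 0 <= C`_k.
  rewrite coefM; apply: sumr_ge0 => j _; apply: mulr_ge0.
    by rewrite coef_odd_poly; apply: E_coef_ge0.
  by rewrite coef_even_poly; apply: E_coef_ge0.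
exists (size C), (fun k => Num.sqrt C`_k *: (u * 'X^k)),
  ('X * v * (2%:R * u * Bt + v * P) - sg%:P * u ^+ 2 * Bt).
have hsum : \sum_(k < size C) (Num.sqrt C`_k *: (u * 'X^k)) ^+ 2 = u ^+ 2 * (Bt * A2).
  rewrite /Bt /A2 -comp_polyM -/C comp_polyE mulr_sumr; apply: eq_bigr => k _.
  rewrite exprZn sqr_sqrtr // exprMn -exprM mulnC exprM -scalerAr.
  done.
have hA2 : A2 = sg%:P * P + Bt * 'X by rewrite hP; ring.
have hX : 'X = 'X * (u * Bt + v * P) ^+ 2 by rewrite huv expr1n mulr1.
rewrite hsum hA2 {1}hX; ring.
Qed.

End PolyCore.
Lemma root_prodXsubC_gen (F : comNzRingType) (s : seq F) l :
  l \in s -> (\prod_(l' <- s) ('X - l'%:P)).[l] = 0.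
Proof.
elim: s => [|l' s IH] //; rewrite in_cons big_cons hornerM => /orP [/eqP <-|hl].
  by rewrite hornerXsubC subrr mul0r.
by rewrite IH // mulr0.
Qed.

Section Core.
Variables (R : realType) (n : nat) (h : {mpoly R[n]}) (e : 'I_n -> R).
Local Notation NC := (NC R n).
Local Notation J := (@inJ R n h e).

Lemma core (y : NC) (ls : seq R) : (forall l, l \in ls -> 0 < l) ->
  isp y -> st y = y -> J (horner_alg y (\prod_(l <- ls) ('X - l%:P))) ->
  in_SOS h e y.
Proof.
move=> hpos hy sty hJ.
have [m [g [Q hX]]] := poly_core hpos.
set s := \sum_(k < m) st (horner_alg y (g k)) * horner_alg y (g k).
have hs : SOS s.
  apply: big_ind => //; [exact: SOS0 | exact: SOSD|].
  by move=> k _; apply: SOSsq; apply: isp_halg.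
apply: (IS_J hs).
have -> : y = s + horner_alg y (\prod_(l <- ls) ('X - l%:P)) * horner_alg y Q.
  rewrite -{1}(horner_algX y) {1}hX rmorphD rmorph_sum rmorphM /=; congr (_ + _).
  by apply: eq_bigr => k _; rewrite rmorphXn st_halg sty expr2.
by rewrite addrAC subrr add0r; apply: JMr => //; apply: isp_halg.
Qed.

End Core.

Section Factor.
Variable R : realType.

Lemma imC0 (z : R[i]) : 'Im z = 0 -> z = ((complex.Re z)%:C)%C.
Proof. by rewrite -complexIm; case: z => a b /= [->]. Qed.

Lemma cpoly_nz (q : {poly R}) : only_real_roots q -> q != 0.
Proof.
move=> hq; apply/eqP => q0; have := hq 'i%C.
rewrite q0 /cpoly map_poly0 /root horner0 eqxx => /(_ isT) /imC0 [] /eqP.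
by rewrite oner_eq0.
Qed.

Lemma real_factor (q : {poly R}) : only_real_roots q ->
  exists ls : seq R, q = lead_coef q *: \prod_(l <- ls) ('X - l%:P) /\
    forall l, l \in ls -> root (cpoly q) (l%:C)%C.
Proof.
move=> hq; have qnz := cpoly_nz hq.
have [rs hrs] := closed_field_poly_normal (cpoly q).
have hroot z : z \in rs -> root (cpoly q) z.
  by move=> hz; rewrite /root hrs hornerZ root_prodXsubC_gen // mulr0.
have hre z : z \in rs -> z = ((complex.Re z)%:C)%C.
  by move=> hz; apply: imC0; apply: hq; apply: hroot.
exists [seq complex.Re z | z <- rs]; split; last first.
  by move=> l /mapP [z hz ->]; rewrite -hre //; apply: hroot.
apply: (@map_poly_inj _ _ (real_complex R)).
rewrite -[map_poly _ q]/(cpoly q) {1}hrs map_polyZ rmorph_prod /=.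
rewrite lead_coef_map /= big_map; congr (_ *: _); apply: eq_big_seq => z hz.
by rewrite map_polyXsubC /= -hre.
Qed.

Lemma hae0 n (h : {mpoly R[n]}) (a e : 'I_n -> R) : (hae h a e).[0] = h.@[a].
Proof.
rewrite /hae mevalE (perm_big _ (msupp_map_mpoly _ (@polyC_inj R))) horner_sum.
rewrite mevalE; apply: eq_bigr => m _.
rewrite mcoeff_map_mpoly hornerM hornerC horner_prod; congr (_ * _).
apply: eq_bigr => i _; rewrite horner_exp; congr (_ ^+ _).
by rewrite hornerD hornerN hornerCM hornerX mulr0 subr0 hornerC.
Qed.

End Factor.
Section Main.
Variables (R : realType) (n : nat) (h : {mpoly R[n]}) (e : 'I_n -> R).
Local Notation NC := (NC R n).
Local Notation J := (@inJ R n h e).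

Lemma ncdotE (a : 'I_n -> R) : (ncdot a : NC) = \sum_(i < n) a i *: (@ncvar R n i : NC).
Proof. by apply: funext => w; rewrite sumE. Qed.

Lemma st_var i : st (@ncvar R n i : NC) = @ncvar R n i.
Proof.
apply: funext => w; rewrite stE /ncvar.
have -> : (rev w == [:: i]) = (w == [:: i]).
  by rewrite -[[:: i]]/(rev [:: i]) (inj_eq (inv_inj (@revK _))).
by case: ifP => _; apply/eqP; rewrite eq_complex /= oppr0 !eqxx.
Qed.

Lemma isp_dot a : isp (ncdot a : NC).
Proof. by rewrite ncdotE; apply: isp_sum => i _; apply: ispZ; apply: isp_var. Qed.

Lemma st_dot a : st (ncdot a : NC) = ncdot a.
Proof. by rewrite ncdotE st_sum; apply: eq_bigr => i _; rewrite stZ st_var. Qed.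

Lemma J_hae a : J (horner_alg (ncdot a : NC) (hae h a e)).
Proof. rewrite -ncpevalE; apply: inJ_gen; left; by exists a. Qed.

Lemma J_prod a ls : hae h a e = lead_coef (hae h a e) *: \prod_(l <- ls) ('X - l%:P) ->
  lead_coef (hae h a e) != 0 ->
  J (horner_alg (ncdot a : NC) (\prod_(l <- ls) ('X - l%:P))).
Proof.
move=> hf hl; have := JZ (lead_coef (hae h a e))^-1 (J_hae a).
by rewrite [X in horner_alg _ X]hf linearZ /= mulr_algl scalerA mulVf // scale1r.
Qed.

Lemma partii a : in_hcone_interior h e a -> in_SOS h e (ncdot a).
Proof.
move=> hq.
have hr : only_real_roots (hae h a e) by move=> z /hq [].
have [ls [hf hroots]] := real_factor hr.
have hl : lead_coef (hae h a e) != 0 by rewrite lead_coef_eq0; apply: cpoly_nz.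
apply: (@core _ _ h e _ ls); [|exact: isp_dot|exact: st_dot|exact: J_prod].
move=> l /hroots /hq [_]; rewrite -complexRe /= ltcR //.
Qed.

End Main.
Section PartI.
Variables (R : realType) (n : nat) (h : {mpoly R[n]}) (e : 'I_n -> R).
Local Notation NC := (NC R n).
Local Notation J := (@inJ R n h e).

Lemma parti a : h.@[a] != 0 -> invertibleA h e (ncdot a).
Proof.
move=> ha.
set q := hae h a e; set x : NC := ncdot a; set D := drop_poly 1 q.
set q0 := q`_0.
have hq0 : q0 != 0 by rewrite /q0 -horner_coef0 hae0.
have hdec : q = q0%:P + D * 'X.
  rewrite -{1}(poly_take_drop 1 q) expr1; congr (_ + _).
  by apply/polyP => i; rewrite coef_take_poly coefC; case: i.
have hphi : horner_alg x q = q0 *: 1 + horner_alg x D * x.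
  by rewrite {1}hdec rmorphD rmorphM /= horner_algC horner_algX.
have comm : x * horner_alg x D = horner_alg x D * x.
  by rewrite -{1}(horner_algX x) -rmorphM mulrC rmorphM /= horner_algX.
have hDx : horner_alg x D * x = horner_alg x q - q0 *: 1 by rewrite hphi addrAC subrr add0r.
have hJ : J ((- q0^-1) *: horner_alg x q) by apply: JZ; apply: J_hae.
exists ((- q0^-1) *: horner_alg x D); split; last split.
- by apply: ispZ; apply: isp_halg; apply: isp_dot.
- apply: J_eq hJ; rewrite -[ncsub _ _]/(x * _ - 1) -scalerAr comm hDx.
  by rewrite scalerBr scalerA mulNr mulVf // scaleN1r opprK addrK.
- apply: J_eq hJ; rewrite -[ncsub _ _]/(_ * x - 1) -scalerAl hDx.
  by rewrite scalerBr scalerA mulNr mulVf // scaleN1r opprK addrK.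
Qed.

End PartI.
Section Var.
Variables (R : realType) (n : nat) (h : {mpoly R[n]}) (e : 'I_n -> R).
Local Notation NC := (NC R n).
Local Notation J := (@inJ R n h e).

Lemma sum_abs_ge (ls : seq R) m : m \in ls -> `|m| <= \sum_(l <- ls) `|l|.
Proof.
elim: ls => [|l ls IH] //; rewrite in_cons big_cons => /orP [/eqP ->|hm].
  by rewrite lerDl sumr_ge0.
by rewrite (le_trans (IH hm)) // lerDr.
Qed.

Lemma comp_shift (ls : seq R) c s :
  (\prod_(l <- ls) ('X - (c + s * l)%:P)) \Po (c%:P + s%:P * 'X) =
  (s ^+ size ls)%:P * \prod_(l <- ls) ('X - l%:P).
Proof.
elim: ls => [|l ls IH]; first by rewrite !big_nil /= expr0 polyC1 mulr1 -polyC1 comp_polyC.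
rewrite !big_cons comp_polyM IH comp_polyB comp_polyX comp_polyC /= exprS polyCM.
rewrite polyCD polyCM; ring.
Qed.

Lemma dot_delta i : (ncdot (fun j => (j == i)%:R) : NC) = @ncvar R n i.
Proof.
rewrite ncdotE (bigD1 i) //= eqxx scale1r big1 ?addr0 // => j /negbTE ->.
by rewrite scale0r.
Qed.

Lemma var_shift i : hyperbolic h e -> exists c : R, 0 < c /\
  forall s : R, `|s| <= 1 ->
    in_SOS h e (horner_alg (@ncvar R n i : NC) (c%:P + s%:P * 'X)).
Proof.
move=> [_ hyp].
set d := fun j : 'I_n => ((j == i)%:R : R).
have hr := hyp d.
have [ls [hf _]] := real_factor hr.
have hl : lead_coef (hae h d e) != 0 by rewrite lead_coef_eq0; apply: cpoly_nz.
have hJP := J_prod hf hl; rewrite dot_delta in hJP.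
set S := \sum_(l <- ls) `|l|.
have S0 : 0 <= S by apply: sumr_ge0.
exists (1 + S); split; first by apply: ltr_pwDl.
move=> s hs.
set r := (1 + S)%:P + s%:P * 'X.
apply: (@core _ _ h e _ [seq (1 + S) + s * l | l <- ls]).
- move=> x /mapP [l hl' ->].
  have h1 : `|s * l| <= S.
    rewrite normrM (le_trans _ (sum_abs_ge hl')) //.
    by rewrite -[X in _ <= X]mul1r ler_wpM2r.
  move: h1 => /ler_normlP [h1 _]; lra.
- by apply: isp_halg; apply: isp_var.
- by rewrite st_halg st_var.
- rewrite halg_comp big_map comp_shift rmorphM /= horner_algC mulr_algl.
  by apply: JZ.
Qed.

Lemma var_bnd i : hyperbolic h e -> exists N : R, 0 <= N /\
  in_SOS h e (N *: 1 - st (@ncvar R n i : NC) * (@ncvar R n i : NC)).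
Proof.
move=> hyp; have [c [c0 hc]] := var_shift i hyp.
set f := horner_alg (@ncvar R n i : NC).
set rp := c%:P + 1%:P * 'X; set rm := c%:P + (-1)%:P * 'X.
have hp : in_SOS h e (f rp) by apply: hc; rewrite normr1.
have hm : in_SOS h e (f rm) by apply: hc; rewrite normrN normr1.
have stf p : st (f p) = f p by rewrite /f st_halg st_var.
exists (c ^+ 2); split; first by apply: sqr_ge0.
have key : (2 * c) *: (c ^+ 2 *: 1 - st (@ncvar R n i : NC) * (@ncvar R n i : NC)) =
           st (f rp) * f rm * f rp + st (f rm) * f rp * f rm.
  rewrite !stf st_var -!rmorphM -rmorphD.
  have -> : (2 * c) *: (c ^+ 2 *: (1 : NC) - (@ncvar R n i : NC) * (@ncvar R n i : NC)) =
            f ((2 * c) *: ((c ^+ 2)%:P - 'X * 'X)).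
    by rewrite /f linearZ /= rmorphB /= horner_algC rmorphM /= horner_algX mulr_algl.
  congr (f _); rewrite /rp /rm -mul_polyC polyC1 mul1r polyCN mulN1r polyCM rmorphXn /=.
  rewrite (_ : (2 : R)%:P = 2%:R) ?rmorph_nat //; ring.
have -> : c ^+ 2 *: 1 - st (@ncvar R n i : NC) * (@ncvar R n i : NC) =
          (2 * c)^-1 *: ((2 * c) *: (c ^+ 2 *: 1 - st (@ncvar R n i : NC) * (@ncvar R n i : NC))).
  by rewrite scalerA mulVf ?scale1r // mulf_neq0 // ?pnatr_eq0 // gt_eqF.
rewrite key; apply: IS_Z.
  by rewrite invr_ge0 mulr_ge0 // ?ler0n // ltW.
apply: IS_add; apply: IS_conj => //; by apply: isp_halg; apply: isp_var.
Qed.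

End Var.
Section Psi.
Variables (R : realType) (V : lmodType R) (K : nat) (v : nat -> V).
Definition Psi (p : {poly R}) : V := \sum_(i < K) p`_i *: v i.
Lemma PsiD p q : Psi (p + q) = Psi p + Psi q.
Proof. by rewrite /Psi -big_split; apply: eq_bigr => i _; rewrite coefD scalerDl. Qed.
Lemma PsiN p : Psi (- p) = - Psi p.
Proof. by rewrite /Psi -sumrN; apply: eq_bigr => i _; rewrite coefN scaleNr. Qed.
Lemma PsiZ c p : Psi (c *: p) = c *: Psi p.
Proof. by rewrite /Psi scaler_sumr; apply: eq_bigr => i _; rewrite coefZ scalerA. Qed.
Lemma PsiXn i : (i < K)%N -> Psi 'X^i = v i.
Proof.
move=> hi; rewrite /Psi (bigD1 (Ordinal hi)) //= coefXn eqxx scale1r big1 ?addr0 //.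
move=> j hj; rewrite coefXn; case: eqP => [hji|]; last by rewrite scale0r.
by move: hj; rewrite -(inj_eq val_inj) /= hji eqxx.
Qed.
End Psi.

Ltac psi_fold := do ![rewrite -PsiZ | rewrite -PsiN | rewrite -PsiD].

Section Bnd.
Variables (R : realType) (n : nat) (h : {mpoly R[n]}) (e : 'I_n -> R).
Local Notation NC := (NC R n).
Local Notation J := (@inJ R n h e).

Definition bnd (x : NC) := isp x /\
  exists N : R, 0 <= N /\ in_SOS h e (N *: 1 - st x * x).

Lemma bndD x y : bnd x -> bnd y -> bnd (x + y).
Proof.
move=> [hx [N1 [N10 hN1]]] [hy [N2 [N20 hN2]]]; split; first exact: ispD.
exists (2 * (N1 + N2)); split; first by rewrite mulr_ge0 ?addr_ge0 ?ler0n.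
have -> : 2 * (N1 + N2) *: (1 : NC) - st (x + y) * (x + y) =
   2 *: (N1 *: 1 - st x * x) + 2 *: (N2 *: 1 - st y * y) + st (x - y) * (x - y).
  rewrite stD stB !mulrDl !mulrDr ?mulNr ?mulrN ?opprK.
  set v := nth (0 : NC) [:: 1; st x * x; st x * y; st y * x; st y * y].
  rewrite -[1 : NC]/(v 0%N) -[st x * x]/(v 1%N) -[st x * y]/(v 2%N).
  rewrite -[st y * x]/(v 3%N) -[st y * y]/(v 4%N).
  rewrite -!(@PsiXn _ _ 5 v) //; psi_fold; congr (Psi _ _ _); rewrite -!mul_polyC; ring.
apply: IS_add; first apply: IS_add.
- by apply: IS_Z => //; rewrite ler0n.
- by apply: IS_Z => //; rewrite ler0n.
- by apply: IS_SOS; apply: SOSsq; apply: ispB.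
Qed.

End Bnd.

Section Bnd2.
Variables (R : realType) (n : nat) (h : {mpoly R[n]}) (e : 'I_n -> R).
Local Notation NC := (NC R n).
Local Notation J := (@inJ R n h e).

Lemma bndM x y : bnd h e x -> bnd h e y -> bnd h e (x * y).
Proof.
move=> [hx [N1 [N10 hN1]]] [hy [N2 [N20 hN2]]]; split; first exact: ispM.
exists (N1 * N2); split; first by rewrite mulr_ge0.
have -> : N1 * N2 *: (1 : NC) - st (x * y) * (x * y) =
   N1 *: (N2 *: 1 - st y * y) + st y * (N1 *: 1 - st x * x) * y.
  rewrite stM mulrBr mulrBl -scalerAr mulr1 -scalerAl !mulrA.
  set v := nth (0 : NC) [:: 1; st y * y; st y * st x * x * y].
  rewrite -[1 : NC]/(v 0%N) -[st y * y]/(v 1%N) -[st y * st x * x * y]/(v 2%N).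
  rewrite -!(@PsiXn _ _ 3 v) //; psi_fold; congr (Psi _ _ _); rewrite -!mul_polyC.
  rewrite !polyCM; ring.
apply: IS_add; first by apply: IS_Z.
exact: IS_conj.
Qed.

Definition cs (c : R[i]) : NC := fun w => if w is [::] then c else 0.

Lemma cs_mul c (p : NC) w : (cs c * p) w = c * p w.
Proof.
case: w => [|x w]; first by rewrite mulE mul_nil.
rewrite mulE mul_cons /=.
have -> : dl x (cs c) = 0 by apply: funext => w'.
by rewrite -mulE mul0r zeroE addr0.
Qed.

Lemma st_cs c : st (cs c) = cs (c^*)%C.
Proof.
apply: funext => w; rewrite stE; case: w => [|x w] //=.
rewrite rev_cons; case: (rev w) => [|? ?] /=; apply/eqP; rewrite eq_complex /= oppr0 !eqxx //.
Qed.

Lemma bnd_cs c : bnd h e (cs c).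
Proof.
split; first exact: isp_scal.
exists ((complex.Re c) ^+ 2 + (complex.Im c) ^+ 2); split.
  by rewrite addr_ge0 // sqr_ge0.
have -> : ((complex.Re c) ^+ 2 + (complex.Im c) ^+ 2) *: (1 : NC) - st (cs c) * cs c = 0.
  apply: funext => w; rewrite subE st_cs cs_mul scaleE zeroE oneE.
  case: w => [|x w] /=; last by rewrite !mulr0 subrr.
  rewrite mulr1; case: c => a b; apply/eqP; rewrite subr_eq0 eq_complex /=.
  by apply/andP; split; apply/eqP; ring.
by apply: IS_SOS; exact: SOS0.
Qed.

Lemma bnd0 : bnd h e 0.
Proof.
have -> : (0 : NC) = cs 0 by apply: funext => -[|x w].
exact: bnd_cs.
Qed.

Lemma bnd_sum I (r : seq I) (P : pred I) (F : I -> NC) :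
  (forall i, P i -> bnd h e (F i)) -> bnd h e (\sum_(i <- r | P i) F i).
Proof. by move=> hF; apply: big_ind => //; [exact: bnd0 | exact: bndD]. Qed.

Hypothesis hyp : hyperbolic h e.

Lemma bnd_var i : bnd h e (@ncvar R n i).
Proof.
split; first exact: isp_var.
have [N [N0 hN]] := var_bnd i hyp; by exists N.
Qed.

Lemma decomp (p : NC) : p = cs (p [::]) + \sum_(i < n) (@ncvar R n i : NC) * dl i p.
Proof.
apply: funext => w; rewrite addE sumE; case: w => [|x w].
  by rewrite /= big1 ?addr0 // => i _; rewrite mulE mul_nil /ncvar /= mul0r.
rewrite /= add0r (bigD1 x) //= big1 ?addr0.
  rewrite mulE mul_cons /ncvar /= mul0r add0r.
  rewrite (_ : dl x _ = cs 1); last first.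
    apply: funext => w'; rewrite /dl; case: w' => [|y w'] /=; first by rewrite eqxx.
    by case: ifP => // /eqP.
  by rewrite -mulE cs_mul mul1r.
move=> i hi; rewrite mulE mul_cons /ncvar /= mul0r add0r.
rewrite (_ : dl x _ = cs 0); first by rewrite -mulE cs_mul mul0r.
apply: funext => w'; rewrite /dl; case: w' => [|y w'] /=.
  by case: ifP => // /eqP [] hx; move: hi; rewrite hx eqxx.
by case: ifP => // /eqP.
Qed.

Lemma bnd_poly N : forall p : NC, (forall w, (N <= size w)%N -> p w = 0) -> bnd h e p.
Proof.
elim: N => [|N IH] p hp.
  have -> : p = 0 by apply: funext => w; apply: hp.
  exact: bnd0.
rewrite (decomp p); apply: bndD; first exact: bnd_cs.
apply: bnd_sum => i _; apply: bndM; first exact: bnd_var.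
by apply: IH => w hw; rewrite /dl hp.
Qed.

End Bnd2.
Section Final.
Variables (R : realType) (n : nat) (h : {mpoly R[n]}) (e : 'I_n -> R).
Local Notation NC := (NC R n).
Local Notation J := (@inJ R n h e).

Lemma partiii : hyperbolic h e -> forall b : ncpoly R n, is_ncpoly b -> hermitianA h e b ->
     exists eps : R, 0 < eps /\
       forall t : R, - eps <= t <= eps ->
         in_SOS h e (ncadd (@nc1 R n) (ncscale (t%:C)%C b)).
Proof.
move=> hyp b; change NC in b; move=> [M hM] hherm.
have [hb [N [N0 hN]]] := bnd_poly hyp hM.
have h1N : 0 < 1 + N by lra.
set eps := (1 + N)^-1.
have heps : eps * (1 + N) = 1 by rewrite mulVf // gt_eqF.
have eps0 : 0 < eps by rewrite invr_gt0.
exists eps; split => // t /andP [ht1 ht2].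
have htN : t ^+ 2 * N <= 1.
  have : t ^+ 2 <= eps ^+ 2 by nra.
  have : eps ^+ 2 * N <= 1 by nra.
  nra.
change (in_SOS h e (1 + t *: (b : NC))).
set a := Num.sqrt (2^-1 : R).
have ha : a * a = 2^-1 by rewrite -expr2 sqr_sqrtr // invr_ge0 ler0n.
set u : NC := a *: (1 + t *: (b : NC)).
have hu : isp u by apply: ispZ; apply: ispD; [exact: isp1 | exact: ispZ].
apply: (@IS_cong _ _ h e _ (st u * u + (t ^+ 2 / 2) *: (N *: 1 - st b * b) +
                            (2^-1 - t ^+ 2 * N / 2) *: 1)).
  have hJ := JZ (- (t / 2)) hherm.
  apply: J_eq hJ; rewrite -[ncsub _ _]/(st b - b : NC).
  rewrite /u stZ stD st1 stZ -scalerAl -scalerAr scalerA ha.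
  rewrite mulrDl mulrDr !mul1r mulrDr mulr1 -!scalerAl -!scalerAr !scalerA.
  set v := nth (0 : NC) [:: 1; b; st b; st b * b].
  rewrite -[1 : NC]/(v 0%N) -[b : NC]/(v 1%N) -[st b]/(v 2%N) -[st b * b]/(v 3%N).
  rewrite -!(@PsiXn _ _ 4 v) //; psi_fold; congr (Psi _ _ _).
  apply/polyP => i; rewrite !coefE.
  by case: i => [|[|[|[|i]]]] /=; field.
apply: IS_add; first apply: IS_add.
- by apply: IS_SOS; apply: SOSsq.
- apply: IS_Z => //; apply: mulr_ge0; [exact: sqr_ge0 | by rewrite invr_ge0 ler0n].
- apply: IS_cst; lra.
Qed.

End Final.

Theorem lemma2p2 (R : realType) (n : nat) (h : {mpoly R[n]}) (e : 'I_n -> R) :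
  homogeneous h -> hyperbolic h e ->
  (forall a : 'I_n -> R, h.@[a] != 0 -> invertibleA h e (ncdot a)) /\
  (forall a : 'I_n -> R, in_hcone_interior h e a -> in_SOS h e (ncdot a)) /\
  (forall b : ncpoly R n, is_ncpoly b -> hermitianA h e b ->
     exists eps : R, 0 < eps /\
       forall t : R, - eps <= t <= eps ->
         in_SOS h e (ncadd (@nc1 R n) (ncscale (t%:C)%C b))).
Proof.
move=> _ hyp; split; first by move=> a; apply: parti.
split; first by move=> a; apply: partii.
exact: partiii.
Qed.
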